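(* For the monomial symmetric polynomials $m_\mu=m_\mu(L_1,L_2,L_3,L_4)$ in $\mathbb Z S_4$: (1) for $i\ge 7$, $m_i=14m_{i-2}-49m_{i-4}+36m_{i-6}$; (2) for $i\ge 6$, $m_{i,i}=8m_{i-1,i-1}-5m_{i-2,i-2}-50m_{i-3,i-3}+36m_{i-4,i-4}+72m_{i-5,i-5}$; (3) for $i\ge 5$, $m_{i,i,i}=40m_{i-2,i-2,i-2}-144m_{i-4,i-4,i-4}$.
   Context: $S_4$ is the symmetric group on $\{1,2,3,4\}$, $\mathbb Z S_4$ its integral group ring. The Jucys–Murphy elements are $L_1=0$ and $L_i=\sum_{k=1}^{i-1}(k\ i)$ for $i=2,3,4$; they pairwise commute. For a partition $\mu=(\mu_1,\dots,\mu_r)$, $m_\mu(x_1,\dots,x_4)$ is the monomial symmetric polynomial: the sum of all distinct monomials $x_1^{\alpha_1}\cdots x_4^{\alpha_4}$ with $(\alpha_1,\dots,\alpha_4)$ a rearrangement of $(\mu_1,\dots,\mu_r,0,\dots,0)$ ($m_\mu=0$ if $r>4$, and $m_\emptyset=1$). We write $m_\mu$ for $m_\mu(L_1,L_2,L_3,L_4)$ and omit parentheses in subscripts, e.g. $m_{i,i}=m_{(i,i)}$. *)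

(* Defs.v *)
From HB Require Import structures.
From mathcomp Require Import all_boot all_order all_algebra all_fingroup.
Set Implicit Arguments. Unset Strict Implicit. Unset Printing Implicit Defensive.
Import GRing.Theory.
Local Open Scope ring_scope.

(* The integral group ring Z S_4: functions 'S_4 -> int (coefficient vectors),
   with pointwise Z-module structure (inherited by {ffun _ -> int}) and
   convolution product.  Points 1,2,3,4 are the ordinals 0,1,2,3 of 'I_4. *)
Definition ZS4 := {ffun 'S_4 -> int}.

Definition gelt (g : 'S_4) : ZS4 := [ffun h => ((h == g) : nat)%:Z].

Definition gone : ZS4 := gelt 1%g.

(* (sum_h a_h h)(sum_k b_k k) = sum_g (sum_h a_h b_{h^-1 g}) g *)
Definition gmul (a b : ZS4) : ZS4 :=
  [ffun g => \sum_(h : 'S_4) a h * b (h^-1 * g)%g].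

Definition gpow (a : ZS4) (n : nat) : ZS4 := iter n (gmul a) gone.

(* Jucys-Murphy elements: L i = sum_{k < i} (k i); L 0 = 0. *)
Definition JM (i : 'I_4) : ZS4 :=
  \sum_(k < 4 | (k < i)%N) gelt (tperm k i).

(* mu padded with zeros to length 4 (mu assumed of length <= 4) *)
Definition pad4 (mu : seq nat) : seq nat := take 4 (mu ++ nseq 4 0%N).

Definition exps (mu : seq nat) : seq (seq nat) :=
  undup [seq [seq nth 0%N (pad4 mu) (s i) | i <- enum 'I_4] | s : 'S_4].

Definition monJM (alpha : seq nat) : ZS4 :=
  foldr gmul gone [seq gpow (JM i) (nth 0%N alpha i) | i <- enum 'I_4].

Definition msym (mu : seq nat) : ZS4 :=
  if (size mu <= 4)%N then \sum_(alpha <- exps mu) monJM alpha else 0.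

(* Main.v *)
Require Import Defs.
From HB Require Import structures.
From mathcomp Require Import all_boot all_order all_algebra all_fingroup.
Set Implicit Arguments. Unset Strict Implicit. Unset Printing Implicit Defensive.
Import GRing.Theory.
Local Open Scope ring_scope.

Definition CC : seq (seq nat) := [:: [:: 0; 1; 2; 3]; [:: 0; 1; 3; 2]; [:: 0; 2; 1; 3]; [:: 0; 2; 3; 1]; [:: 0; 3; 1; 2]; [:: 0; 3; 2; 1]; [:: 1; 0; 2; 3]; [:: 1; 0; 3; 2]; [:: 1; 2; 0; 3]; [:: 1; 2; 3; 0]; [:: 1; 3; 0; 2]; [:: 1; 3; 2; 0]; [:: 2; 0; 1; 3]; [:: 2; 0; 3; 1]; [:: 2; 1; 0; 3]; [:: 2; 1; 3; 0]; [:: 2; 3; 0; 1]; [:: 2; 3; 1; 0]; [:: 3; 0; 1; 2]; [:: 3; 0; 2; 1]; [:: 3; 1; 0; 2]; [:: 3; 1; 2; 0]; [:: 3; 2; 0; 1]; [:: 3; 2; 1; 0]]%N.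

Definition psi (s : 'S_4) : seq nat := [seq val (s (inord k)) | k <- iota 0 4].

Lemma size_psi s : size (psi s) = 4%N.
Proof. by rewrite size_map size_iota. Qed.

Lemma nth_psi s k : (k < 4)%N -> nth 0%N (psi s) k = val (s (inord k)).
Proof. by move=> hk; rewrite (nth_map 0%N) ?size_iota // nth_iota. Qed.

Lemma psi_inj : injective psi.
Proof.
move=> s t h; apply/permP => x; apply: val_inj.
have E : inord x = x :> 'I_4 by apply/val_inj; rewrite /= inordK.
have := nth_psi s (ltn_ord x); by rewrite h nth_psi // E => ->.
Qed.

Lemma valid_in_CC (l : seq nat) : size l = 4%N -> all (fun x => x < 4)%N l -> uniq l -> l \in CC.
Proof.
case: l => [|a [|b [|c [|d [|? ?]]]]] //= _.
case/and5P => ha hb hc hd _.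
case: a ha => [|[|[|[|a]]]] //= _;
case: b hb => [|[|[|[|b]]]] //= _;
case: c hc => [|[|[|[|c]]]] //= _;
case: d hd => [|[|[|[|d]]]] //= _.
Qed.

Lemma psi_in s : psi s \in CC.
Proof.
apply: valid_in_CC; first exact: size_psi.
  by apply/allP => x /mapP [k _ ->]; exact: ltn_ord.
rewrite map_inj_in_uniq ?iota_uniq // => x y; rewrite !mem_iota !add0n => hx hy.
move=> /val_inj /perm_inj h.
by rewrite -(@inordK 3 x) // -(@inordK 3 y) // h.
Qed.

Lemma CC_uniq : uniq CC. Proof. by []. Qed.

Lemma psi_enum_perm : perm_eq (map psi (index_enum 'S_4)) CC.
Proof.
have U : uniq (map psi (index_enum 'S_4)).
  by rewrite map_inj_uniq ?index_enum_uniq //; exact: psi_inj.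
have S : {subset map psi (index_enum 'S_4) <= CC} by move=> x /mapP [s _ ->]; exact: psi_in.
have Z : size (map psi (index_enum 'S_4)) = 24%N.
  by rewrite size_map [index_enum _]unlock -enumT -cardE card_Sn.
have [_ E] := uniq_min_size U S (eq_leq (esym Z)).
exact: uniq_perm U CC_uniq E.
Qed.

Lemma sum_psi (F : seq nat -> int) : \sum_(h : 'S_4) F (psi h) = \sum_(c <- CC) F c.
Proof. by rewrite -(perm_big _ psi_enum_perm) big_map. Qed.


Definition idx (c : seq nat) := index c CC.
Definition cmul (c d : seq nat) : seq nat := [seq nth 0%N d (nth 0%N c k) | k <- iota 0 4].
Definition cinv (c : seq nat) : seq nat := [seq index k c | k <- iota 0 4].

Lemma inord_val4 (x : 'I_4) : inord (val x) = x.
Proof. by apply/val_inj; rewrite /= inordK. Qed.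

Lemma val_inord4 k : (k < 4)%N -> \val (inord k : 'I_4) = k.
Proof. exact: inordK. Qed.

Lemma psi_uniq s : uniq (psi s).
Proof.
rewrite map_inj_in_uniq ?iota_uniq // => x y; rewrite !mem_iota !add0n => hx hy.
move=> /val_inj /perm_inj h.
by rewrite -(@inordK 3 x) // -(@inordK 3 y) // h.
Qed.

Lemma psiM s t : psi (s * t)%g = cmul (psi s) (psi t).
Proof.
apply: (@eq_from_nth _ 0%N); first by rewrite size_psi size_map size_iota.
rewrite size_psi => k hk.
rewrite nth_psi // permM (nth_map 0%N) ?size_iota // nth_iota // add0n.
by rewrite nth_psi // nth_psi ?ltn_ord // inord_val4.
Qed.

Lemma psiV s : psi (s^-1)%g = cinv (psi s).
Proof.
apply: (@eq_from_nth _ 0%N); first by rewrite size_psi size_map size_iota.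
rewrite size_psi => k hk.
rewrite nth_psi // (nth_map 0%N) ?size_iota // nth_iota // add0n.
set x := (s^-1)%g (inord k).
have H : nth 0%N (psi s) (val x) = k.
  by rewrite nth_psi ?ltn_ord // inord_val4 /x permKV; apply: inordK.
by rewrite -[in RHS]H index_uniq ?size_psi ?ltn_ord ?psi_uniq.
Qed.

Lemma psi1 : psi 1%g = [:: 0; 1; 2; 3]%N.
Proof.
apply: (@eq_from_nth _ 0%N); first by rewrite size_psi.
rewrite size_psi => k hk.
by rewrite nth_psi // perm1 val_inord4 //; case: k hk => [|[|[|[|k]]]].
Qed.

Definition ctperm (a b : nat) : seq nat :=
  [seq if k == a then b else if k == b then a else k | k <- iota 0 4].

Lemma psi_tperm (x y : 'I_4) : psi (tperm x y) = ctperm (val x) (val y).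
Proof.
apply: (@eq_from_nth _ 0%N); first by rewrite size_psi size_map size_iota.
rewrite size_psi => k hk.
rewrite nth_psi // (nth_map 0%N) ?size_iota // nth_iota // add0n.
rewrite /tperm permE /=.
have e : forall z : 'I_4, (inord k == z) = (k == val z).
  by move=> z; rewrite -(inj_eq val_inj) val_inord4.
rewrite !e; case: (k == val x) => //; case: (k == val y) => //.
by rewrite val_inord4.
Qed.

Definition rep (a : ZS4) (v : seq int) := forall s, a s = nth 0 v (idx (psi s)).

Lemma idx_lt s : (idx (psi s) < 24)%N.
Proof. by rewrite /idx index_mem psi_in. Qed.

Lemma nth_idx s : nth [::] CC (idx (psi s)) = psi s.
Proof. by rewrite /idx nth_index ?psi_in. Qed.

Definition vzero : seq int := nseq 24 0.
Definition vadd (v w : seq int) : seq int := [seq nth 0 v j + nth 0 w j | j <- iota 0 24].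
Definition vscale (z : int) (v : seq int) : seq int := [seq nth 0 v j * z | j <- iota 0 24].
Definition vgelt (d : seq nat) : seq int := [seq ((c == d) : nat)%:Z | c <- CC].
Definition vone := vgelt [:: 0; 1; 2; 3]%N.
Definition vmul (va vb : seq int) : seq int :=
  [seq foldr (fun c acc => nth 0 va (idx c) * nth 0 vb (idx (cmul (cinv c) d)) + acc) 0 CC | d <- CC].
Definition vpow (v : seq int) (n : nat) := iter n (vmul v) vone.
Fixpoint vsumn (m : nat) (w : nat -> seq int) : seq int :=
  match m with 0%N => vzero | m'.+1 => vadd (w 0%N) (vsumn m' (fun k => w k.+1)) end.

Lemma rep_zero : rep 0 vzero.
Proof. by move=> s; rewrite ffunE nth_nseq if_same. Qed.

Lemma rep_add a b v w : rep a v -> rep b w -> rep (a + b) (vadd v w).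
Proof.
move=> ha hb s; rewrite ffunE ha hb (nth_map 0%N) ?size_iota ?idx_lt //.
by rewrite nth_iota ?idx_lt.
Qed.

Lemma rep_scale a v z : rep a v -> rep (a *~ z) (vscale z v).
Proof.
move=> ha s; rewrite ffunMzE ha (nth_map 0%N) ?size_iota ?idx_lt //.
by rewrite nth_iota ?idx_lt // add0n mulrzz.
Qed.

Lemma rep_gelt g : rep (gelt g) (vgelt (psi g)).
Proof.
move=> s; rewrite ffunE (nth_map [::]) ?idx_lt // nth_idx.
by rewrite (inj_eq psi_inj).
Qed.

Lemma rep_one : rep gone vone.
Proof. by rewrite /vone -psi1; exact: rep_gelt. Qed.

Lemma big_foldr (I : Type) (r : seq I) (f : I -> int) :
  \sum_(c <- r) f c = foldr (fun c acc => f c + acc) 0 r.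
Proof. by elim: r => [|c r IH]; rewrite ?big_nil ?big_cons ?IH. Qed.

Lemma rep_mul a b v w : rep a v -> rep b w -> rep (gmul a b) (vmul v w).
Proof.
move=> ha hb g; rewrite ffunE.
under eq_bigr => h _ do rewrite ha hb psiM psiV.
rewrite (sum_psi (fun c => nth 0 v (idx c) * nth 0 w (idx (cmul (cinv c) (psi g))))).
by rewrite (nth_map [::]) ?idx_lt // nth_idx big_foldr.
Qed.

Lemma rep_pow a v n : rep a v -> rep (gpow a n) (vpow v n).
Proof.
move=> ha; elim: n => [|n IH]; first exact: rep_one.
exact: rep_mul.
Qed.

Lemma rep_sum m (F : 'I_m -> ZS4) (w : nat -> seq int) :
  (forall k : 'I_m, rep (F k) (w (val k))) -> rep (\sum_(k < m) F k) (vsumn m w).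
Proof.
elim: m F w => [|m IH] F w H; first by rewrite big_ord0; exact: rep_zero.
rewrite big_ord_recl /=; apply: rep_add; first exact: H.
by apply: (IH (fun k => F (lift ord0 k)) (fun k => w k.+1)) => k; apply: H.
Qed.

Lemma rep_eq a b v : rep a v -> rep b v -> a = b.
Proof. by move=> ha hb; apply/ffunP => s; rewrite ha hb. Qed.

Definition vJM (n : nat) := vsumn 4 (fun k => if (k < n)%N then vgelt (ctperm k n) else vzero).

Lemma rep_JM (n : nat) : (n < 4)%N -> rep (JM (inord n)) (vJM n).
Proof.
move=> hn; rewrite /JM big_mkcond /=; apply: rep_sum => k.
rewrite inordK //; case: ifP => _; last exact: rep_zero.
by rewrite -{2}(@inordK 3 n) // -psi_tperm; exact: rep_gelt.
Qed.



Lemma gmul1l x : gmul gone x = x.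
Proof.
apply/ffunP => g; rewrite ffunE (bigD1 1%g) //= big1 ?addr0.
  by rewrite ffunE eqxx invg1 mul1g mul1r.
by move=> h /negbTE hn; rewrite ffunE hn mul0r.
Qed.

Lemma gmul1r x : gmul x gone = x.
Proof.
apply/ffunP => g; rewrite ffunE (bigD1 g) //= big1 ?addr0.
  by rewrite ffunE mulVg eqxx mulr1.
by move=> h /negbTE hn; rewrite ffunE -eq_mulVg1 hn mulr0.
Qed.

Lemma gmul0l x : gmul 0 x = 0.
Proof. by apply/ffunP => g; rewrite !ffunE big1 // => h _; rewrite ffunE mul0r. Qed.

Lemma gmulDr x a b : gmul x (a + b) = gmul x a + gmul x b.
Proof.
apply/ffunP => g; rewrite !ffunE -big_split /=; apply: eq_bigr => h _.
by rewrite ffunE mulrDr.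
Qed.

Lemma gmulzr x a z : gmul x (a *~ z) = gmul x a *~ z.
Proof.
apply/ffunP => g; rewrite ffunMzE !ffunE mulrzz mulr_suml; apply: eq_bigr => h _.
by rewrite ffunMzE mulrzz mulrA.
Qed.

Lemma gmul0r x : gmul x 0 = 0.
Proof. by apply/ffunP => g; rewrite !ffunE big1 // => h _; rewrite ffunE mulr0. Qed.

Lemma gmul_sumr x m (F : 'I_m -> ZS4) : gmul x (\sum_(k < m) F k) = \sum_(k < m) gmul x (F k).
Proof.
elim/big_rec2: _ => [|k y1 y2 _ <-]; first exact: gmul0r.
exact: gmulDr.
Qed.

Lemma gmulA a b c : gmul (gmul a b) c = gmul a (gmul b c).
Proof.
apply/ffunP => g; rewrite !ffunE.
under eq_bigr => h _ do rewrite ffunE mulr_suml.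
rewrite exchange_big /=; apply: eq_bigr => k _.
rewrite ffunE mulr_sumr (reindex_inj (mulgI k)) /=; apply: eq_bigr => h _.
by rewrite mulKg invMg mulgA mulrA.
Qed.

Lemma gpowS x n : gpow x n.+1 = gmul x (gpow x n).
Proof. by []. Qed.

Lemma gpow_comm x y n : gmul x y = gmul y x -> gmul (gpow x n) y = gmul y (gpow x n).
Proof.
move=> h; elim: n => [|n IH]; first by rewrite /= gmul1l gmul1r.
by rewrite gpowS gmulA IH -!gmulA h.
Qed.

Lemma gpowM x y n : gmul x y = gmul y x -> gpow (gmul x y) n = gmul (gpow x n) (gpow y n).
Proof.
move=> h; elim: n => [|n IH]; first by rewrite /= gmul1l.
rewrite !gpowS IH !gmulA; congr (gmul x _).
by rewrite -!gmulA (gpow_comm n h).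
Qed.

Lemma gpow0 n : gpow 0 n.+1 = 0.
Proof. by rewrite gpowS gmul0l. Qed.


Definition recP (cs : seq int) (u : nat -> ZS4) :=
  forall n, u (n.+1 + size cs)%N = \sum_(k < size cs) u (n.+1 + k)%N *~ cs`_k.

Lemma rec_add cs u v : recP cs u -> recP cs v -> recP cs (fun n => u n + v n).
Proof.
move=> hu hv n; rewrite hu hv -big_split /=; apply: eq_bigr => k _.
by rewrite mulrzDl.
Qed.

Lemma rec_gpow cs x v : rep x v ->
  vpow v (1 + size cs) = vsumn (size cs) (fun k => vscale cs`_k (vpow v (1 + k))) ->
  recP cs (gpow x).
Proof.
move=> hx hv; elim=> [|n IH].
  apply: (rep_eq (rep_pow _ hx)); rewrite hv; apply: rep_sum => k.
  exact/rep_scale/rep_pow.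
rewrite addSn gpowS IH gmul_sumr; apply: eq_bigr => k _.
by rewrite gmulzr.
Qed.


Lemma enum4 : enum 'I_4 = [seq inord k | k <- iota 0 4].
Proof. by rewrite -val_enum_ord -map_comp map_id_in // => x _ /=; rewrite inord_val4. Qed.

Lemma nth_map0 j (p : seq nat) n : nth 0%N (map (muln j) p) n = (j * nth 0%N p n)%N.
Proof.
elim: p n => [|a p IH] [|n] //=; by rewrite muln0.
Qed.

Lemma exps_perm : perm_eq (enum 'S_4) (index_enum 'S_4).
Proof.
apply: uniq_perm; [exact: enum_uniq | exact: index_enum_uniq |].
by move=> x; rewrite mem_enum mem_index_enum.
Qed.

Lemma msym_exps mu mu1 j : (0 < j)%N -> (size mu <= 4)%N ->
  pad4 mu = map (muln j) (pad4 mu1) ->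
  msym mu = \sum_(alpha <- undup (map (map (nth 0%N (pad4 mu1))) CC)) monJM (map (muln j) alpha).
Proof.
move=> j0 smu hpad; rewrite /msym smu /exps.
set G1 := map (nth 0%N (pad4 mu1)).
have injm : injective (map (muln j)).
  by apply: inj_map => a b /eqP; rewrite eqn_pmul2l // => /eqP.
have EF : forall s : 'S_4, [seq nth 0%N (pad4 mu) (s i) | i <- enum 'I_4] = map (muln j) (G1 (psi s)).
  move=> s; rewrite enum4 -!map_comp; apply: eq_map => k /=.
  by rewrite hpad nth_map0.
have -> : [seq [seq nth 0%N (pad4 mu) (s i) | i <- enum 'I_4] | s : 'S_4] =
   map (fun s : 'S_4 => [seq nth 0%N (pad4 mu) (s i) | i <- enum 'I_4]) (enum 'S_4) by [].
rewrite (eq_map EF) (map_comp (map (muln j))) undup_map_inj // big_map.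
apply: perm_big; apply: uniq_perm; rewrite ?undup_uniq // => x.
rewrite !mem_undup; apply: perm_mem; rewrite (map_comp G1 psi); apply: perm_map.
exact: perm_trans (perm_map psi exps_perm) psi_enum_perm.
Qed.


Definition L (k : nat) := JM (inord k).

Lemma JM0 : L 0 = 0.
Proof. by rewrite /L /JM big1 // => k; rewrite val_inord4. Qed.

Lemma msym1 j : (0 < j)%N -> msym [:: j] = gpow (L 1) j + gpow (L 2) j + gpow (L 3) j.
Proof.
case: j => // j _.
have hp : pad4 [:: j.+1] = map (muln j.+1) (pad4 [:: 1%N]).
  by rewrite /pad4 /= muln1 muln0.
rewrite (@msym_exps _ [:: 1%N] j.+1 isT _ hp) //.
have -> : undup (map (map (nth 0%N (pad4 [:: 1%N]))) CC) =
  [:: [:: 1; 0; 0; 0]; [:: 0; 1; 0; 0]; [:: 0; 0; 1; 0]; [:: 0; 0; 0; 1]]%N by vm_compute.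
rewrite !big_cons big_nil /monJM enum4 /= !muln1 !muln0 /=.
rewrite !inordK //= -!/(L _) -!gpowS JM0 gpow0 !gmul1r !gmul1l add0r addr0 !addrA.
reflexivity.
Qed.

Lemma repL k : (k < 4)%N -> rep (L k) (vJM k).
Proof. exact: rep_JM. Qed.

Lemma comm_rep a b va vb : rep a va -> rep b vb -> vmul va vb = vmul vb va -> gmul a b = gmul b a.
Proof. move=> ha hb e; apply: (rep_eq (rep_mul ha hb)); rewrite e; exact: rep_mul. Qed.

Lemma c12 : gmul (L 1) (L 2) = gmul (L 2) (L 1).
Proof. by apply: (comm_rep (repL _) (repL _)) => //; vm_compute. Qed.
Lemma c13 : gmul (L 1) (L 3) = gmul (L 3) (L 1).
Proof. by apply: (comm_rep (repL _) (repL _)) => //; vm_compute. Qed.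
Lemma c23 : gmul (L 2) (L 3) = gmul (L 3) (L 2).
Proof. by apply: (comm_rep (repL _) (repL _)) => //; vm_compute. Qed.
Lemma c1_23 : gmul (L 1) (gmul (L 2) (L 3)) = gmul (gmul (L 2) (L 3)) (L 1).
Proof. by apply: (comm_rep (repL _) (rep_mul (repL _) (repL _))) => //; vm_compute. Qed.

Lemma msym2 j : (0 < j)%N -> msym [:: j; j] =
  gpow (gmul (L 1) (L 2)) j + gpow (gmul (L 1) (L 3)) j + gpow (gmul (L 2) (L 3)) j.
Proof.
case: j => // j _.
have hp : pad4 [:: j.+1; j.+1] = map (muln j.+1) (pad4 [:: 1; 1]%N).
  by rewrite /pad4 /= muln1 muln0.
rewrite (@msym_exps _ [:: 1; 1]%N j.+1 isT _ hp) //.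
have -> : undup (map (map (nth 0%N (pad4 [:: 1; 1]%N))) CC) =
  [:: [:: 1; 1; 0; 0]; [:: 1; 0; 1; 0]; [:: 1; 0; 0; 1];
           [:: 0; 1; 1; 0]; [:: 0; 1; 0; 1]; [:: 0; 0; 1; 1]]%N by vm_compute.
rewrite !big_cons big_nil /monJM enum4 /= !muln1 !muln0 /=.
rewrite !inordK //= -!/(L _) -!gpowS JM0 gpow0 !gmul1r !gmul1l !gmul0l !add0r addr0 !addrA.
by rewrite !gpowM ?c12 ?c13 ?c23.
Qed.

Lemma msym3 j : (0 < j)%N -> msym [:: j; j; j] =
  gpow (gmul (L 1) (gmul (L 2) (L 3))) j.
Proof.
case: j => // j _.
have hp : pad4 [:: j.+1; j.+1; j.+1] = map (muln j.+1) (pad4 [:: 1; 1; 1]%N).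
  by rewrite /pad4 /= muln1 muln0.
rewrite (@msym_exps _ [:: 1; 1; 1]%N j.+1 isT _ hp) //.
have -> : undup (map (map (nth 0%N (pad4 [:: 1; 1; 1]%N))) CC) =
  [:: [:: 1; 1; 1; 0]; [:: 1; 1; 0; 1]; [:: 1; 0; 1; 1]; [:: 0; 1; 1; 1]]%N by vm_compute.
rewrite !big_cons big_nil /monJM enum4 /= !muln1 !muln0 /=.
rewrite !inordK //= -!/(L _) -!gpowS JM0 gpow0 !gmul1r !gmul1l !gmul0l !add0r addr0.
by rewrite !gpowM ?c1_23 ?c23.
Qed.


Definition cs1 : seq int := [:: 36%Z; 0%Z; (- 49)%Z; 0%Z; 14%Z; 0%Z].
Definition cs2 : seq int := [:: 72%Z; 36%Z; (- 50)%Z; (- 5)%Z; 8%Z].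
Definition cs3 : seq int := [:: (- 144)%Z; 0%Z; 40%Z; 0%Z].

Lemma r1 k : (k < 4)%N -> recP cs1 (gpow (L k)).
Proof.
move=> hk; apply: (rec_gpow (repL hk)).
by case: k hk => [|[|[|[|]]]] //= _; vm_compute.
Qed.

Lemma r2a : recP cs2 (gpow (gmul (L 1) (L 2))).
Proof. by apply: (rec_gpow (rep_mul (repL _) (repL _))) => //; vm_compute. Qed.
Lemma r2b : recP cs2 (gpow (gmul (L 1) (L 3))).
Proof. by apply: (rec_gpow (rep_mul (repL _) (repL _))) => //; vm_compute. Qed.
Lemma r2c : recP cs2 (gpow (gmul (L 2) (L 3))).
Proof. by apply: (rec_gpow (rep_mul (repL _) (repL _))) => //; vm_compute. Qed.
Lemma r3 : recP cs3 (gpow (gmul (L 1) (gmul (L 2) (L 3)))).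
Proof. by apply: (rec_gpow (rep_mul (repL _) (rep_mul (repL _) (repL _)))) => //; vm_compute. Qed.


Lemma arith1 (V : zmodType) (a0 a1 a2 a3 a4 a5 : V) :
  a0 *~ 36%Z + a1 *~ 0%Z + a2 *~ (-49)%Z + a3 *~ 0%Z + a4 *~ 14%Z + a5 *~ 0%Z
  = a4 *~ 14 - a2 *~ 49 + a0 *~ 36.
Proof.
rewrite !mulr0z !addr0 (_ : (-49)%Z = - 49%Z) // mulrNz.
by rewrite addrC (addrC (a0 *~ 36)) addrA.
Qed.

Lemma arith2 (V : zmodType) (a0 a1 a2 a3 a4 : V) :
  a0 *~ 72%Z + a1 *~ 36%Z + a2 *~ (-50)%Z + a3 *~ (-5)%Z + a4 *~ 8%Z
  = a4 *~ 8 - a3 *~ 5 - a2 *~ 50 + a1 *~ 36 + a0 *~ 72.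
Proof.
rewrite (_ : (-50)%Z = - 50%Z) // (_ : (-5)%Z = - 5%Z) // !mulrNz.
set x0 := a0 *~ 72; set x1 := a1 *~ 36; set x2 := - (a2 *~ 50); set x3 := - (a3 *~ 5); set x4 := a4 *~ 8.
by rewrite [RHS]addrC [x4 + x3 + x2 + x1]addrC [x4 + x3 + x2]addrC [x4 + x3]addrC !addrA.
Qed.

Lemma arith3 (V : zmodType) (a0 a1 a2 a3 : V) :
  a0 *~ (-144)%Z + a1 *~ 0%Z + a2 *~ 40%Z + a3 *~ 0%Z
  = a2 *~ 40 - a0 *~ 144.
Proof.
rewrite !mulr0z !addr0 (_ : (-144)%Z = - 144%Z) // mulrNz.
by rewrite addrC.
Qed.

Lemma recP1 (u : nat -> ZS4) : recP cs1 u -> forall n,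
  u (n.+1 + 6)%N = u (n.+1 + 4)%N *~ 14 - u (n.+1 + 2)%N *~ 49 + u (n.+1 + 0)%N *~ 36.
Proof. move=> h n; rewrite (h n) !big_ord_recr big_ord0 /= add0r; exact: arith1. Qed.

Lemma recP2 (u : nat -> ZS4) : recP cs2 u -> forall n,
  u (n.+1 + 5)%N = u (n.+1 + 4)%N *~ 8 - u (n.+1 + 3)%N *~ 5
       - u (n.+1 + 2)%N *~ 50 + u (n.+1 + 1)%N *~ 36 + u (n.+1 + 0)%N *~ 72.
Proof. move=> h n; rewrite (h n) !big_ord_recr big_ord0 /= add0r; exact: arith2. Qed.

Lemma recP3 (u : nat -> ZS4) : recP cs3 u -> forall n,
  u (n.+1 + 4)%N = u (n.+1 + 2)%N *~ 40 - u (n.+1 + 0)%N *~ 144.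
Proof. move=> h n; rewrite (h n) !big_ord_recr big_ord0 /= add0r; exact: arith3. Qed.

Theorem lemma2p2 :
  (forall i : nat, (7 <= i)%N ->
     msym [:: i] =
       msym [:: i - 2]%N *~ 14 - msym [:: i - 4]%N *~ 49
       + msym [:: i - 6]%N *~ 36) /\
  (forall i : nat, (6 <= i)%N ->
     msym [:: i; i] =
       msym [:: i - 1; i - 1]%N *~ 8 - msym [:: i - 2; i - 2]%N *~ 5
       - msym [:: i - 3; i - 3]%N *~ 50 + msym [:: i - 4; i - 4]%N *~ 36
       + msym [:: i - 5; i - 5]%N *~ 72) /\
  (forall i : nat, (5 <= i)%N ->
     msym [:: i; i; i] =
       msym [:: i - 2; i - 2; i - 2]%N *~ 40
       - msym [:: i - 4; i - 4; i - 4]%N *~ 144).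
Proof.
split; [|split].
- move=> i hi; have [n ->] : exists n, i = (n.+1 + 6)%N.
    by exists (i - 7)%N; rewrite addSn -addnS subnK.
  have h : recP cs1 (fun j => gpow (L 1) j + gpow (L 2) j + gpow (L 3) j).
    apply: (@rec_add _ (fun j => gpow (L 1) j + gpow (L 2) j)); last exact: r1.
    by apply: rec_add; apply: r1.
  have d2 : (n.+1 + 6 - 2 = n.+1 + 4)%N by rewrite !addnS !subSS subn0.
  have d4 : (n.+1 + 6 - 4 = n.+1 + 2)%N by rewrite !addnS !subSS subn0.
  have d6 : (n.+1 + 6 - 6 = n.+1 + 0)%N by rewrite !addnS !subSS subn0.
  rewrite d2 d4 d6 !msym1; try by rewrite addSn.
  exact: (recP1 h n).
- move=> i hi; have [n ->] : exists n, i = (n.+1 + 5)%N.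
    by exists (i - 6)%N; rewrite addSn -addnS subnK.
  have h : recP cs2 (fun j => gpow (gmul (L 1) (L 2)) j + gpow (gmul (L 1) (L 3)) j
                              + gpow (gmul (L 2) (L 3)) j).
    apply: (@rec_add _ (fun j => gpow (gmul (L 1) (L 2)) j + gpow (gmul (L 1) (L 3)) j)); last exact: r2c.
    by apply: rec_add; [apply: r2a | apply: r2b].
  have d1 : (n.+1 + 5 - 1 = n.+1 + 4)%N by rewrite !addnS !subSS subn0.
  have d2 : (n.+1 + 5 - 2 = n.+1 + 3)%N by rewrite !addnS !subSS subn0.
  have d3 : (n.+1 + 5 - 3 = n.+1 + 2)%N by rewrite !addnS !subSS subn0.
  have d4 : (n.+1 + 5 - 4 = n.+1 + 1)%N by rewrite !addnS !subSS subn0.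
  have d5 : (n.+1 + 5 - 5 = n.+1 + 0)%N by rewrite !addnS !subSS subn0.
  rewrite d1 d2 d3 d4 d5 !msym2; try by rewrite addSn.
  exact: (recP2 h n).
- move=> i hi; have [n ->] : exists n, i = (n.+1 + 4)%N.
    by exists (i - 5)%N; rewrite addSn -addnS subnK.
  have d2 : (n.+1 + 4 - 2 = n.+1 + 2)%N by rewrite !addnS !subSS subn0.
  have d4 : (n.+1 + 4 - 4 = n.+1 + 0)%N by rewrite !addnS !subSS subn0.
  rewrite d2 d4 !msym3; try by rewrite addSn.
  exact: (recP3 r3 n).
Qed.
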